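(* Let $\mathcal E$ be an exchangeability system for a noncommutative probability space $(\mathcal A,\phi)$ and $X_1,\dots,X_n\in\mathcal A$. Then $$K_n(X_1,\dots,X_n)=\sum_{\pi\in\Pi_n}\phi_\pi(X_1,\dots,X_n)\,\mu(\pi,\hat1_n),$$ where $\mu$ is the Möbius function of the partition lattice $\Pi_n$.
   Context: A noncommutative probability space is a pair $(\mathcal A,\phi)$ of a complex unital algebra $\mathcal A$ and a unital linear functional $\phi$. An exchangeability system $\mathcal E$ for $(\mathcal A,\phi)$ consists of a noncommutative probability space $(\mathcal U,\tilde\phi)$ and a family $(\iota_k)_{k\in\mathbb N}$ of embeddings (injective unital algebra homomorphisms) $\iota_k:\mathcal A\to\mathcal A_k\subseteq\mathcal U$ with $\tilde\phi\circ\iota_k=\phi$; write $X^{(k)}=\iota_k(X)$. It is required that for all $X_1,\dots,X_n\in\mathcal A$, all indices $i_1,\dots,i_n\in\mathbb N$ and every bijection $\sigma$ of $\mathbb N$, $\tilde\phi(X_1^{(i_1)}\cdots X_n^{(i_n)})=\tilde\phi(X_1^{(\sigma(i_1))}\cdots X_n^{(\sigma(i_n))})$; so this value depends only on the kernel of $h:j\mapsto i_j$ (the partition of $[n]=\{1,\dots,n\}$ into the level sets of $h$), and for a partition $\pi$ it is denoted $\phi_\pi(X_1,\dots,X_n)$. $\Pi_n$ is the lattice of set partitions of $[n]$ ordered by refinement, $\hat1_n$ its maximal element (one block). For a primitive $n$-th root of unity $\omega$ put $X_j^\omega=\sum_{k=1}^n\omega^kX_j^{(k)}$ and $K_n(X_1,\dots,X_n)=\frac1n\tilde\phi(X_1^\omega\cdots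 X_n^\omega)$. *)

(* Defs.v *)
From HB Require Import structures.
From mathcomp Require Import all_boot all_order all_algebra.
Set Implicit Arguments. Unset Strict Implicit. Unset Printing Implicit Defensive.
Import Order.TTheory GRing.Theory Num.Theory.
Local Open Scope ring_scope.

Section Defs.
Variable C : numClosedFieldType.

Definition unital_functional (A : algType C) (f : A -> C) : Prop :=
  (forall (a : C) (x y : A), f (a *: x + y) = a * f x + f y) /\ f 1 = 1.

Definition embedding (A U : algType C) (g : A -> U) : Prop :=
  [/\ injective g,
      (forall (a : C) (x y : A), g (a *: x + y) = a *: g x + g y),
      (forall x y : A, g (x * y) = g x * g y) & g 1 = 1].

Definition exchangeable (A U : algType C) (phit : U -> C)
    (iota : nat -> A -> U) : Prop :=
  forall (n : nat) (X : 'I_n -> A) (i : 'I_n -> nat) (sigma : nat -> nat),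
    bijective sigma ->
    phit (\prod_(j < n) iota (i j) (X j)) =
    phit (\prod_(j < n) iota (sigma (i j)) (X j)).

Definition exchangeability_system (A U : algType C) (phi : A -> C)
    (phit : U -> C) (iota : nat -> A -> U) : Prop :=
  [/\ unital_functional phit,
      (forall k, embedding (iota k)),
      (forall k x, phit (iota k x) = phi x) & exchangeable phit iota].

Definition set_partitions (n : nat) : {set {set {set 'I_n}}} :=
  [set P : {set {set 'I_n}} | partition P [set: 'I_n]].

Definition refines (n : nat) (P Q : {set {set 'I_n}}) : bool :=
  [forall B in P, exists D in Q, B \subset D].

(** The maximal partition (one block), for n >= 1. *)
Definition hat1 (n : nat) : {set {set 'I_n}} := [set [set: 'I_n]].

(** Moebius function of a finite poset (D, le), D : {set T}, by the usual
    recursion mu(x,x)=1, mu(x,y) = - sum_{x <= z < y} mu(x,z) for x < y,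
    mu(x,y)=0 otherwise; [k] is fuel, and #|T| suffices. *)
Fixpoint mobius_fuel (T : finType) (D : {set T}) (le : rel T) (k : nat)
    (x y : T) : C :=
  if x == y then 1 else
  match k with
  | 0 => 0
  | k'.+1 =>
    if le x y then
      - \sum_(z in D | le x z && le z y && (z != y)) mobius_fuel D le k' x z
    else 0
  end.

Definition mobius (T : finType) (D : {set T}) (le : rel T) (x y : T) : C :=
  mobius_fuel D le #|T| x y.

Definition mobius_Pi (n : nat) (P Q : {set {set 'I_n}}) : C :=
  mobius (set_partitions n) (@refines n) P Q.

(** Canonical index map h_P : j |-> number of the block of P containing j;
    its kernel is P (for P a partition). *)
Definition block_index (n : nat) (P : {set {set 'I_n}}) (j : 'I_n) : nat :=
  index (pblock P j) (enum P).

(** phi_pi(X_1,...,X_n) = phit(X_1^{(h 1)} ... X_n^{(h n)}) with ker h = pi. *)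
Definition phi_pi (A U : algType C) (phit : U -> C) (iota : nat -> A -> U)
    (n : nat) (P : {set {set 'I_n}}) (X : 'I_n -> A) : C :=
  phit (\prod_(j < n) iota (block_index P j) (X j)).

Definition X_omega (A U : algType C) (iota : nat -> A -> U) (n : nat)
    (w : C) (x : A) : U :=
  \sum_(1 <= k < n.+1) (w ^+ k) *: iota k x.

Definition K_n (A U : algType C) (phit : U -> C) (iota : nat -> A -> U)
    (n : nat) (w : C) (X : 'I_n -> A) : C :=
  n%:R^-1 * phit (\prod_(j < n) X_omega iota n w (X j)).

End Defs.

(* Main.v *)
Require Import Defs.
From HB Require Import structures.
From mathcomp Require Import all_boot all_order all_algebra.
Import GRing.Theory Num.Theory.
Local Open Scope ring_scope.
Set Implicit Arguments. Unset Strict Implicit.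



Section Mob.
Variable C : numClosedFieldType.
Variables (T : finType) (D : {set T}) (le : rel T).
Hypothesis le_refl : forall x, le x x.
Hypothesis le_trans : forall {x y z : T}, le x y -> le y z -> le x z.
Hypothesis le_anti : forall x y, x \in D -> y \in D -> le x y -> le y x -> x = y.

Definition rk x y := #|[set z in D | le x z && le z y && (z != y)]|.

Lemma rk_lt x y z : z \in D -> y \in D -> le x z -> le z y -> z != y -> (rk x z < rk x y)%N.
Proof.
move=> zD yD xz zy zny; rewrite /rk; apply: proper_card; apply/properP; split.
  apply/subsetP => t; rewrite !inE => /andP[-> /andP[/andP[xt tz] tnz]] /=.
  rewrite xt (le_trans tz zy) /=; apply/eqP => ety; subst t.
  by move/eqP: zny; apply; apply: le_anti.
by exists z; rewrite !inE ?zD ?xz ?zy ?zny ?eqxx //= andbF.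
Qed.

Lemma rk_ltT x y : y \in D -> (rk x y < #|T|)%N.
Proof.
move=> yD; rewrite /rk; apply: proper_card; apply/properP; split; first exact: subset_predT.
by exists y => //; rewrite !inE eqxx !andbF.
Qed.

Lemma fuel_stable k1 : forall k2 x y, y \in D -> (rk x y < k1)%N -> (rk x y < k2)%N ->
  mobius_fuel C D le k1 x y = mobius_fuel C D le k2 x y.
Proof.
elim: k1 => [//|k IH] [//|k'] x y yD h1 h2 /=.
case: (x == y) => //; case: (le x y) => //; congr (- _).
apply: eq_bigr => z /andP[zD /andP[/andP[xz zy] zny]].
have := @rk_lt x y z zD yD xz zy zny => lt.
apply: IH => //; apply: leq_trans lt _; rewrite -ltnS //.
Qed.

Lemma mob_rec x y : y \in D -> le x y -> x != y ->
  mobius C D le x y = - \sum_(z in D | le x z && le z y && (z != y)) mobius C D le x z.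
Proof.
move=> yD xy nxy; rewrite /mobius.
have := @rk_ltT x y yD; case E: #|T| => [//|k] lt /=.
rewrite (negbTE nxy) xy; congr (- _); apply: eq_bigr => z /andP[zD /andP[/andP[xz zy] zny]].
have lt2 := @rk_lt x y z zD yD xz zy zny.
transitivity (mobius_fuel C D le k.+1 x z); last by [].
apply: fuel_stable => //; first by apply: leq_trans lt2 _; rewrite -ltnS.
by rewrite -E; exact: rk_ltT.
Qed.

Lemma mob_diag x : mobius C D le x x = 1.
Proof. by rewrite /mobius; case: #|T| => [|k] /=; rewrite eqxx. Qed.

Lemma mob_sum x y : x \in D -> y \in D -> le x y ->
  \sum_(z in D | le x z && le z y) mobius C D le x z = (x == y)%:R.
Proof.
move=> xD yD xy; have [exy|nxy] := eqVneq x y.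
  subst y; rewrite (big_pred1 x) ?mob_diag // => z; rewrite /= andbA.
  apply/idP/eqP => [/andP[/andP[zD xz] zx]|->]; first by apply: le_anti.
  by rewrite xD le_refl.
rewrite (bigD1 y) /=; last by rewrite yD xy le_refl.
rewrite mob_rec //; rewrite addrC; apply/eqP; rewrite subr_eq0; apply/eqP.
by apply: eq_bigl => z; rewrite !andbA.
Qed.

Lemma mob_inv x (F : T -> C) : x \in D ->
  \sum_(z in D | le x z) mobius C D le x z * \sum_(q in D | le z q) F q = F x.
Proof.
move=> xD.
under eq_bigr do rewrite mulr_sumr.
rewrite (exchange_big_dep (mem D)) /=; last by move=> i j _ /andP[].
rewrite (bigD1 x) //= [X in _ + X]big1 ?addr0.
  rewrite -mulr_suml -[RHS]mul1r; congr (_ * _).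
  apply: eq_trans (_ : _ = (x == x)%:R) _; last by rewrite eqxx.
  rewrite -(@mob_sum x x xD xD (le_refl x)).
  by apply: eq_bigl => z; rewrite xD /= andbA.
move=> q /andP[qD nqx]; rewrite -mulr_suml.
case: (boolP (le x q)) => xq.
  rewrite -[X in X * _](_ : \sum_(z in D | le x z && le z q) mobius C D le x z = _).
    by rewrite (@mob_sum x q) // eq_sym (negbTE nqx) mul0r.
  by apply: eq_bigl => z; rewrite qD /= andbA.
rewrite big_pred0 ?mul0r // => z; apply/negP => /andP[/andP[_ xz] /andP[_ zq]].
by rewrite (le_trans xz zq) in xq.
Qed.
End Mob.



Section Parts.
Variable n : nat.
Local Notation Pn := (set_partitions n).

Lemma inPn P : (P \in Pn) = partition P [set: 'I_n].
Proof. by rewrite inE. Qed.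

Lemma refines_refl (P : {set {set 'I_n}}) : refines P P.
Proof. by apply/forall_inP => B PB; apply/exists_inP; exists B. Qed.

Lemma refines_trans (P Q R : {set {set 'I_n}}) : refines P Q -> refines Q R -> refines P R.
Proof.
move=> /forall_inP pq /forall_inP qr; apply/forall_inP => B /pq /exists_inP[D QD BD].
have /exists_inP[E RE DE] := qr D QD; apply/exists_inP; exists E => //.
exact: subset_trans BD DE.
Qed.

Lemma refines_sub P Q : P \in Pn -> Q \in Pn -> refines P Q -> refines Q P -> P \subset Q.
Proof.
rewrite !inPn => /and3P[_ tP nP] _ /forall_inP pq /forall_inP qp.
apply/subsetP => B PB; have /exists_inP[D QD BD] := pq B PB.
have /exists_inP[B' PB' DB'] := qp D QD.
have /set0Pn[x xB] : B != set0 by apply: contraNneq nP => <-.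
have xB' : x \in B' by apply: (subsetP DB'); apply: (subsetP BD).
have eBB : B = B' by rewrite -(def_pblock tP PB xB) (def_pblock tP PB' xB').
suff -> : B = D by [].
by apply/eqP; rewrite eqEsubset BD; rewrite eBB.
Qed.

Lemma refines_anti P Q : P \in Pn -> Q \in Pn -> refines P Q -> refines Q P -> P = Q.
Proof.
move=> hP hQ pq qp; apply/eqP; rewrite eqEsubset.
by rewrite (refines_sub hP hQ pq qp) (refines_sub hQ hP qp pq).
Qed.

Definition Kf (f : {ffun 'I_n -> 'I_n}) := preim_partition f [set: 'I_n].

Lemma Kf_part f : Kf f \in Pn.
Proof. by rewrite inPn; apply: preim_partitionP. Qed.

Lemma Kf_pblock f i j : (j \in pblock (Kf f) i) = (f i == f j).
Proof.
apply: pblock_equivalence_partition; rewrite ?inE //.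
by move=> x y z _ _ _; split=> // /eqP->.
Qed.

Lemma refines_KfE Z f : Z \in Pn ->
  refines Z (Kf f) = [forall i, forall j, (j \in pblock Z i) ==> (f j == f i)].
Proof.
rewrite inPn => /and3P[/eqP cZ tZ nZ].
have /and3P[/eqP cK tK _] := preim_partitionP f [set: 'I_n].
apply/forall_inP/forallP => [h i|h B ZB].
  apply/forallP => j; apply/implyP => jB.
  have iZ : i \in cover Z by rewrite cZ inE.
  have /exists_inP[D KD BD] := h _ (pblock_mem iZ).
  have iD : i \in D by apply: (subsetP BD); rewrite mem_pblock.
  have jD : j \in D by apply: (subsetP BD).
  by rewrite eq_sym -Kf_pblock /Kf (def_pblock tK KD iD).
have /set0Pn[i iB] : B != set0 by apply: contraNneq nZ => <-.
have iK : i \in cover (Kf f) by rewrite /Kf cK inE.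
apply/exists_inP; exists (pblock (Kf f) i); first exact: pblock_mem.
apply/subsetP => j jB; rewrite Kf_pblock eq_sym.
have := forallP (h i) j; rewrite (def_pblock tZ ZB iB) jB /=.
by [].
Qed.

Lemma hat1_part : (0 < n)%N -> hat1 n \in Pn.
Proof.
move=> n0; rewrite inPn /partition /hat1 cover1 eqxx trivIset1 /= inE.
apply/eqP => /setP /(_ (Ordinal n0)); rewrite !inE.
by [].
Qed.

Lemma refines_hat1 P : refines P (hat1 n).
Proof. by apply/forall_inP => B _; apply/exists_inP; exists [set: 'I_n]; rewrite ?inE ?subsetT. Qed.

End Parts.



Section G.
Variable C : numClosedFieldType.
Variable n : nat.
Variable w : C.
Hypothesis n0 : (0 < n)%N.
Hypothesis wprim : n.-primitive_root w.

Definition cf (f : {ffun 'I_n -> 'I_n}) : C := \prod_(j < n) w ^+ (f j).+1.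

Definition Pz (Z : {set {set 'I_n}}) (f : {ffun 'I_n -> 'I_n}) :=
  [forall i, forall j, (j \in pblock Z i) ==> (f j == f i)].

Lemma g_hat1 : \sum_(f | Pz (hat1 n) f) cf f = n%:R.
Proof.
have tZ : trivIset (hat1 n) by exact: trivIset1.
have pb i : pblock (hat1 n) i = [set: 'I_n] by apply: def_pblock; rewrite ?inE.
pose i0 := Ordinal n0.
rewrite (partition_big (fun f : {ffun 'I_n -> 'I_n} => f i0) xpredT) //=.
transitivity (\sum_(k < n) (1:C)); last by rewrite sumr_const card_ord.
apply: eq_bigr => k _.
rewrite (big_pred1 [ffun=> k]); last first.
  move=> f /=; apply/idP/eqP => [/andP[/forallP h /eqP fk]|->].
    apply/ffunP => j; rewrite ffunE -fk; apply/eqP.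
    by have := forallP (h i0) j; rewrite pb inE.
  by rewrite ffunE eqxx andbT; apply/forallP => i; apply/forallP => j; rewrite !ffunE eqxx implybT.
rewrite /cf; under eq_bigr do rewrite ffunE.
rewrite prodr_const card_ord -exprM mulnC exprM (prim_expr_order wprim) expr1n.
by [].
Qed.

Lemma g_other Z : Z \in set_partitions n -> Z != hat1 n -> \sum_(f | Pz Z f) cf f = 0.
Proof.
rewrite inPn => pZ; have /and3P[/eqP cZ tZ nZ] := pZ => nh.
have [B ZB BT] : exists2 B, B \in Z & B != [set: 'I_n].
  case: (boolP [exists B in Z, B != [set: 'I_n]]) => [/exists_inP[B ZB BT]|hn].
    by exists B.
  have hall B : B \in Z -> B = [set: 'I_n].
    by move=> ZB; apply/eqP; apply: contraR hn => h; apply/exists_inP; exists B.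
  exfalso; move/eqP: nh; apply; apply/setP => B; rewrite /hat1 inE.
  apply/idP/eqP => [ZB|->]; first exact: hall.
  have : Ordinal n0 \in cover Z by rewrite cZ inE.
  case/bigcupP => B' ZB' _.
  by rewrite -(hall B' ZB').
have B0 : B != set0 by apply: contraNneq nZ => <-.
have cB0 : (0 < #|B|)%N by rewrite card_gt0.
have cBn : (#|B| < n)%N.
  have := proper_card (A:=B) (B:=[set: 'I_n]); rewrite cardsT card_ord; apply.
  by rewrite properEneq BT subsetT.
have wB : w ^+ #|B| != 1.
  rewrite -(prim_order_dvd wprim); apply/negP => /(dvdn_leq cB0); rewrite leqNgt cBn.
  by [].
pose sh (f : {ffun 'I_n -> 'I_n}) := [ffun j => if j \in B then ordS (f j) else f j].
pose shi (f : {ffun 'I_n -> 'I_n}) := [ffun j => if j \in B then ord_pred (f j) else f j].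
have shK : cancel sh shi.
  by move=> f; apply/ffunP => j; rewrite !ffunE; case: (j \in B) => //; rewrite ordSK.
have shinj : injective sh := can_inj shK.
have memB i j : j \in pblock Z i -> (j \in B) = (i \in B).
  move=> jb.
  have iZ : i \in cover Z by rewrite cZ inE.
  have jZ : j \in cover Z by rewrite cZ inE.
  have e : pblock Z j = pblock Z i by apply: same_pblock.
  apply/idP/idP => h.
    by rewrite -(def_pblock tZ ZB h) e mem_pblock.
  by rewrite -(def_pblock tZ ZB h).
have Psh f : Pz Z (sh f) = Pz Z f.
  apply: eq_forallb => i; apply: eq_forallb => j.
  case: (boolP (j \in pblock Z i)) => //= jb.
  rewrite !ffunE (memB _ _ jb); case: ifP => // _.
  by rewrite (inj_eq (can_inj (@ordSK n))).
have csh f : cf (sh f) = cf f * w ^+ #|B|.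
  rewrite /cf -prodr_const (big_mkcond (fun j => j \in B)) -big_split /=.
  apply: eq_bigr => j _; rewrite ffunE; case: ifP => _; last by rewrite mulr1.
  rewrite /ordS /= exprS expr_mod ?(prim_expr_order wprim) // -exprSr.
  by [].
set g := \sum_(f | Pz Z f) cf f.
have : g = g * w ^+ #|B|.
  rewrite {1}/g (reindex_inj shinj) /= /g mulr_suml; apply: eq_big => f; first by rewrite Psh.
  by move=> _; rewrite csh.
move/eqP; rewrite -subr_eq0 -{1}[g]mulr1 -mulrBr mulf_eq0 subr_eq0.
by rewrite [1 == _]eq_sym (negbTE wB) orbF => /eqP.
Qed.

End G.



Definition swapn (a b x : nat) : nat := if x == a then b else if x == b then a else x.

Lemma swapnK a b : involutive (swapn a b).
Proof.
move=> x; rewrite /swapn.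
case: (eqVneq x a) => [->|xa]; first by rewrite eqxx; case: eqVneq => // ->.
case: (eqVneq x b) => [->|xb]; first by rewrite eqxx.
by rewrite (negbTE xa) (negbTE xb).
Qed.

Lemma ext_bij (n : nat) (h b : 'I_n -> nat) :
  (forall i j, (h i == h j) = (b i == b j)) -> forall m,
  exists sigma : nat -> nat, bijective sigma /\ forall j : 'I_n, (j < m)%N -> sigma (h j) = b j.
Proof.
move=> hb; elim=> [|m [s [bs hs]]].
  by exists id; split=> //; exists id.
case: (ltnP m n) => [mn|nm]; last first.
  exists s; split=> // j _; apply: hs; exact: leq_trans (ltn_ord j) nm.
pose jm := Ordinal mn.
case: (boolP [exists j : 'I_n, (j < m)%N && (h j == h jm)]) => [/existsP[j /andP[jm' e]]|ne].
  exists s; split=> // j'; rewrite ltnS leq_eqVlt => /orP[/eqP e'|]; last exact: hs.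
  have -> : j' = jm by apply: val_inj.
  by rewrite -(eqP e) hs //; apply/eqP; rewrite -hb.
exists (swapn (s (h jm)) (b jm) \o s); split.
  apply: bij_comp => //; exists (swapn (s (h jm)) (b jm)); exact: swapnK.
move=> j; rewrite ltnS leq_eqVlt => /orP[/eqP e'|jm'].
  have -> : j = jm by apply: val_inj.
  by rewrite /= /swapn eqxx.
have hne : h j != h jm by apply: contra ne => e; apply/existsP; exists j; rewrite jm' e.
rewrite /= (hs j jm') /swapn.
have -> : (b j == s (h jm)) = false.
  by rewrite -(hs j jm'); apply/negbTE; rewrite (inj_eq (bij_inj bs)).
by rewrite -hb (negbTE hne).
Qed.

Lemma exch_Kf (C : numClosedFieldType) (A U : algType C) (phit : U -> C)
  (iota : nat -> A -> U) (n : nat) (X : 'I_n -> A) (f : {ffun 'I_n -> 'I_n}) :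
  exchangeable phit iota ->
  phit (\prod_(j < n) iota (f j).+1 (X j)) = phi_pi phit iota (Kf f) X.
Proof.
move=> ex.
have /and3P[/eqP cK tK _] := preim_partitionP f [set: 'I_n].
have hb : forall i j, ((f i).+1 == (f j).+1) = (block_index (Kf f) i == block_index (Kf f) j).
  move=> i j; rewrite eqSS /block_index.
  have hmem k : pblock (Kf f) k \in enum (Kf f).
    by rewrite mem_enum; apply: pblock_mem; rewrite /Kf cK inE.
  rewrite (inj_in_eq (@index_inj _ set0 (enum (Kf f)))) ?hmem //.
  rewrite eq_pblock //; last by rewrite /Kf cK inE.
  by rewrite Kf_pblock.
have [s [bs hs]] := ext_bij hb n.
rewrite (ex n X (fun j => (f j).+1) s bs) /phi_pi.
by congr phit; apply: eq_bigr => j _; rewrite hs.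
Qed.



Lemma regroup (C : numClosedFieldType) (n : nat) (w : C) (Z : {set {set 'I_n}}) :
  Z \in set_partitions n ->
  \sum_(Q in set_partitions n | refines Z Q) \sum_(f | Kf f == Q) cf w f =
  \sum_(f | Pz Z f) cf w f.
Proof.
move=> ZD.
rewrite [RHS](partition_big (@Kf n) (fun Q => (Q \in set_partitions n) && refines Z Q)).
  apply: eq_bigr => Q /andP[_ ZQ]; apply: eq_bigl => f.
  case: eqVneq => [e|]; last by rewrite andbF.
  by rewrite andbT /Pz -refines_KfE // e.
by move=> f; rewrite Kf_part /Pz -refines_KfE.
Qed.

Lemma fiber_sum (C : numClosedFieldType) (n : nat) (w : C) (P : {set {set 'I_n}}) :
  (0 < n)%N -> n.-primitive_root w -> P \in set_partitions n ->
  \sum_(f | Kf f == P) cf w f = n%:R * mobius_Pi C P (hat1 n).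
Proof.
move=> n0 wp PD.
have h1 := hat1_part n0.
have := mob_inv (C:=C) (@refines_refl n) (@refines_trans n) (@refines_anti n)
  (fun Q => \sum_(f | Kf f == Q) cf w f) PD.
move=> <-.
rewrite (bigD1 (hat1 n)) /=; last by rewrite h1 refines_hat1.
rewrite [X in _ + X]big1 ?addr0.
  by rewrite mulrC /mobius_Pi regroup // g_hat1.
move=> Z /andP[/andP[ZD _] Zh].
by rewrite regroup // (g_other n0 wp ZD Zh) mulr0.
Qed.

Unset Implicit Arguments. Set Strict Implicit.

Theorem theorem2p5 (C : numClosedFieldType) (A U : algType C)
    (phi : A -> C) (phit : U -> C) (iota : nat -> A -> U)
    (n : nat) (w : C) (X : 'I_n -> A) :
  unital_functional phi ->
  exchangeability_system phi phit iota ->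
  (0 < n)%N ->
  n.-primitive_root w ->
  K_n phit iota w X =
  \sum_(P in set_partitions n) phi_pi phit iota P X * @mobius_Pi C n P (hat1 n).
Proof.
move=> _ [[lin _] _ _ ex] n0 wp.
have phit0 : phit 0 = 0.
  by have := lin 1 0 0; rewrite scale1r addr0 mul1r => /eqP; rewrite -subr_eq addrN eq_sym => /eqP.
have phitD x y : phit (x + y) = phit x + phit y by rewrite -[x]scale1r lin mul1r scale1r.
have phitZ a x : phit (a *: x) = a * phit x by rewrite -[a *: x]addr0 lin phit0 addr0.
have Xo x : X_omega iota n w x = \sum_(k < n) w ^+ k.+1 *: iota k.+1 x.
  by rewrite /X_omega big_add1 /= big_mkord.
rewrite /K_n; under eq_bigr do rewrite Xo.
rewrite bigA_distr_bigA /=.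
under eq_bigr do rewrite scaler_prod.
rewrite (big_morph phit phitD phit0).
under eq_bigr do rewrite phitZ (exch_Kf X _ ex).
rewrite (partition_big (@Kf n) (mem (set_partitions n))) /=; last by move=> f _; exact: Kf_part.
rewrite mulr_sumr; apply: eq_bigr => P PD.
rewrite (eq_bigr (fun f => cf w f * phi_pi phit iota P X)); last first.
  by move=> f /eqP ->.
rewrite -mulr_suml (fiber_sum n0 wp PD).
have nz : n%:R != 0 :> C by rewrite pnatr_eq0 -lt0n.
by rewrite !mulrA mulVf // mul1r mulrC.
Qed.
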